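(* If $X\subseteq \mathcal P(\omega)$ is an ultrafilter on $\omega$ (viewed as a subspace of $2^\omega$ via characteristic functions), then Alice has a winning strategy in the grouped Menger game played on $X$.
   Context: $\mathcal P(\omega)$ is identified with $2^\omega$ via characteristic functions, with the product topology. Grouped Menger game on $X\subseteq 2^\omega$: in each round $n\in\omega$ Alice selects a natural number $l_n>0$ and then the players play $l_n$ subrounds of the Menger game, indexed by $i\in[L_n,L_{n+1})$ where $L_0=0$, $L_{n+1}=l_0+\dots+l_n$: in subround $i$ Alice picks an open cover $\mathcal U_i$ of $X$ and Bob picks a finite $\mathcal F_i\subseteq\mathcal U_i$. Bob wins if $X=\bigcup_{n\in\omega}\bigcap_{i\in[L_n,L_{n+1})}\bigcup\mathcal F_i$; otherwise Alice wins. *)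

(* Defs.v *)
From HB Require Import structures.
From mathcomp Require Import all_boot all_order all_algebra.
From mathcomp Require Import all_classical all_reals all_analysis.
Set Implicit Arguments. Unset Strict Implicit. Unset Printing Implicit Defensive.
Local Open Scope classical_set_scope.

(* P(omega) identified with 2^omega = cantor_space (product topology). *)

Definition rel_open (X U : set cantor_space) : Prop :=
  exists V : set cantor_space, open V /\ U = V `&` X.

Definition open_cover_of (X : set cantor_space) (C : set (set cantor_space)) : Prop :=
  (forall U, C U -> rel_open X U) /\ X `<=` \bigcup_(U in C) U.

(* Histories are the finite
   sequences of Bob's moves so far (Alice's own moves are determined by her
   strategy).  [gs_len h] is the number l_n of subrounds Alice announces at a
   round beginning after history h; [gs_cov h] is the cover she plays in the
   subround following history h. *)
Record grouped_strategy := GStrat {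
  gs_len : seq (set (set cantor_space)) -> nat;
  gs_cov : seq (set (set cantor_space)) -> set (set cantor_space) }.

Definition valid_strategy (X : set cantor_space) (s : grouped_strategy) : Prop :=
  (forall h, (0 < gs_len s h)%N) /\ (forall h, open_cover_of X (gs_cov s h)).

Fixpoint round_start (s : grouped_strategy) (F : nat -> set (set cantor_space))
    (n : nat) : nat :=
  match n with
  | 0 => 0
  | n'.+1 => (round_start s F n' + gs_len s (mkseq F (round_start s F n')))%N
  end.

Definition bob_play (s : grouped_strategy) (F : nat -> set (set cantor_space)) : Prop :=
  forall i, finite_set (F i) /\ F i `<=` gs_cov s (mkseq F i).

Definition bob_wins (X : set cantor_space) (s : grouped_strategy)
    (F : nat -> set (set cantor_space)) : Prop :=
  X = \bigcup_(n in [set: nat])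
        \bigcap_(i in [set i : nat | (round_start s F n <= i < round_start s F n.+1)%N])
          \bigcup_(U in F i) U.

Definition alice_winning_strategy (X : set cantor_space) (s : grouped_strategy) : Prop :=
  valid_strategy X s /\ forall F, bob_play s F -> ~ bob_wins X s F.

Definition as_cantor (F : set_system nat) : set cantor_space :=
  [set f : cantor_space | F [set n | f n]].

Definition nonprincipal (F : set_system nat) : Prop :=
  forall A, F A -> infinite_set A.

(* Main.v *)
Require Import Defs.
From mathcomp Require Import all_boot all_classical all_reals all_analysis.
From mathcomp Require Import zify.
Local Open Scope classical_set_scope.

Definition Om (X : set cantor_space) (m : nat) : set cantor_space :=
  [set f : cantor_space | f m /\ X f].

Definition bnd X (S : set (set cantor_space)) : nat :=
  xget 0%N [set k | forall m, S (Om X m) -> (m < k)%N].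

Definition Kh X (h : seq (set (set cantor_space))) : nat := sumn (map (bnd X) h).

Definition strat X := GStrat (fun _ => 2%N)
  (fun h => [set Om X m | m in [set m | (Kh X h <= m)%N]]).

Lemma open_coord (m : nat) : open [set f : cantor_space | f m].
Proof.
suff : @open cantor_space (proj m @^-1` [set true]).
  by congr open; apply/seteqP; split => f /=; case: (f m).
apply: open_comp; [move=> + _; exact: proj_continuous| apply: discrete_open].
Qed.

Lemma rs_strat X G n : round_start (strat X) G n = (2 * n)%N.
Proof. by elim: n => //= n ->; lia. Qed.

Lemma Kh_ge X G t j : (t < j)%N -> (bnd X (G t) <= Kh X (mkseq G j))%N.
Proof.
elim: j => // j IH; rewrite ltnS leq_eqVlt => /orP [/eqP ->|tj].
  by rewrite /Kh mkseqS map_rcons sumn_rcons leq_addl.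
by rewrite /Kh mkseqS map_rcons sumn_rcons (leq_trans (IH tj)) // leq_addr.
Qed.

Lemma seq_bound (s : seq nat) : exists k, forall m, m \in s -> (m < k)%N.
Proof.
elim: s => [|a s [k Hk]]; first by exists 0%N.
exists (maxn a.+1 k) => m; rewrite in_cons => /orP [/eqP ->|/Hk]; lia.
Qed.

Lemma Om_inj (U : set_system nat) : UltraFilter U -> nonprincipal U ->
  injective (Om (as_cantor U)).
Proof.
move=> UF NP m m' E; apply: contrapT => nm.
pose f : cantor_space := fun n => n != m'.
have Xf : as_cantor U f.
  have [U1|UC] := in_ultra_setVsetC [set m'] UF.
    by have := NP _ U1; case; exact: finite_set1.
  by apply: filterS UC => n /= H; apply/eqP.
have : Om (as_cantor U) m f by split => //; rewrite /f /=; apply/eqP.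
by rewrite E => -[]; rewrite /f eqxx.
Qed.

Lemma inf_above (A : set nat) K : infinite_set A -> exists m, (K <= m)%N /\ A m.
Proof.
move=> Ai; apply: contrapT => H; apply: Ai.
apply: (sub_finite_set _ (finite_II K)) => n An /=.
rewrite ltnNge; apply/negP => Kn; apply: H; by exists n.
Qed.

Lemma bnd_ok X (S : set (set cantor_space)) : injective (Om X) -> finite_set S ->
  forall m, S (Om X m) -> (m < bnd X S)%N.
Proof.
move=> inj Fin.
have Fp := finite_preimage (in2W inj) Fin.
have [s Hs] := (finite_seqP _).1 Fp.
have [k Hk] := seq_bound s.
have H : exists k, forall m, S (Om X m) -> (m < k)%N.
  exists k => m Sm; apply: Hk.
  have : (Om X @^-1` S) m by [].
  by rewrite Hs.
have := @xgetPex _ 0%N [set k | forall m, S (Om X m) -> (m < k)%N] H.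
by rewrite /bnd.
Qed.

Theorem mainTheorem5 (F : set_system nat) :
  UltraFilter F -> nonprincipal F ->
  exists s : grouped_strategy, alice_winning_strategy (as_cantor F) s.
Proof.
move=> UF NP; set X := as_cantor F.
have inj : injective (Om X) by exact: Om_inj.
exists (strat X); split.
  split => // h; split.
    move=> _ [m _ <-]; exists [set f : cantor_space | f m]; split => //.
    exact: open_coord.
  move=> f Xf; have [m [Km fm]] := @inf_above _ (Kh X h) (NP _ Xf).
  by exists (Om X m) => //; exists m.
move=> G Gp Bw.
pose M i := [set m | G i (Om X m)].
have Mlo : forall i m, M i m -> (Kh X (mkseq G i) <= m)%N.
  move=> i m Mim; have [_ /(_ _ Mim) [m' Km' /inj E]] := Gp i.
  by rewrite -E.
have Mhi : forall i m, M i m -> (m < bnd X (G i))%N.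
  by move=> i m Mim; apply: bnd_ok => //; have [] := Gp i.
have Mdisj : forall i j m, (i < j)%N -> M i m -> M j m -> False.
  move=> i j m ij Mi Mj.
  have := leq_trans (Mhi _ _ Mi) (leq_trans (Kh_ge X G _ _ ij) (Mlo _ _ Mj)).
  by rewrite ltnn.
pose A e := [set m | exists n, M (2 * n + e)%N m].
have [e [e2 UAe]] : exists e, (e < 2)%N /\ F (~` A e).
  have [UA0|UA0] := in_ultra_setVsetC (A 0%N) UF.
    exists 1%N; split => //; apply: filterS UA0 => m [n Mn] [n' Mn'].
    have [lt|lt] : (2 * n + 0 < 2 * n' + 1)%N \/ (2 * n' + 1 < 2 * n + 0)%N by lia.
      exact: (Mdisj _ _ _ lt Mn Mn').
    exact: (Mdisj _ _ _ lt Mn' Mn).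
  by exists 0%N.
pose f : cantor_space := fun m => `[< ~ A e m >].
have Xf : X f by apply: filterS UAe => m H; apply/asboolP.
have := Xf; rewrite {1}Bw => -[n _ Hn].
have [V GV Vf] := Hn (2 * n + e)%N ltac:(rewrite /= !rs_strat; apply/andP; split; lia).
have [_ /(_ _ GV) [m _ Em]] := Gp (2 * n + e)%N.
move: Vf; rewrite -Em => -[/asboolP fm _]; apply: fm.
by exists n; rewrite /M /= Em.
Qed.
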